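(* Let $G$ be a Carnot group with left-invariant (sub-)Riemannian metric $d$ defined by the left-invariant distribution $D$ with $D(e)=V$ and a left-invariant inner product $\langle\cdot,\cdot\rangle$ on $D$. If $G$ is non-commutative, write $\mathfrak{g}=\bigoplus_{k=1}^{l}\mathfrak{g}_k$ for the grading with $\mathfrak{g}_1=V$, $l\ge 2$, and take the left-invariant rigging $D^{\perp}$ with $D^{\perp}(e)=\bigoplus_{k=2}^{l}\mathfrak{g}_k$. Then $(G,d)$ has zero curvatures (Riemannian curvatures if $G$ is commutative, and Solov'ev sectional, Ricci and scalar curvatures of $(D,\langle\cdot,\cdot\rangle)$ with respect to $D^{\perp}$ otherwise).
   Context: A Carnot group is a Lie group $G$ with Lie algebra $\mathfrak{g}$ equipped with a one-parameter multiplicative group of automorphisms $\delta_s$, $s>0$, such that $V=\{v\in\mathfrak{g}: d\delta_s(v)=sv\}$ generates $\mathfrak{g}$ as a Lie algebra; then $\mathfrak{g}$ is graded nilpotent, $\mathfrak{g}=\bigoplus_{k=1}^l\mathfrak{g}_k$ with $\mathfrak{g}_1=V$ and $[\mathfrak{g}_i,\mathfrak{g}_j]\subset\mathfrak{g}_{i+j}$. Solov'ev curvatures: choose a left-invariant Riemannian metric $(\cdot,\cdot)$ with $(\cdot,\cdot)|_D=\langle\cdot,\cdot\rangle$ and $(D,D^\perp)=0$; let $\nabla$ be its Levi-Civita connection, $H,V$ the projections onto $D,D^\perp$, $\overline{\nabla}_XY=H\nabla_X(HY)+V\nabla_X(VY)$, $T$ its torsion and $\overline{R}$ its curvature. For $X,Y,Z,W$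 tangent to $D$, $(K(X,Y)Z,W)=(\overline{R}(X,Y)Z,W)-\tfrac12(T(X,Y),T(Z,W))$; sectional curvature $K_{uv}=(K(u,v)v,u)/(\|u\|^2\|v\|^2-(u,v)^2)$ for non-collinear $u,v\in D(p)$, Ricci and scalar curvatures are the corresponding sums over orthonormal bases of $D(p)$. *)

(* Defs.v *)
(* Carnot groups are treated through their Lie algebras:
   all objects in the statement (distribution, rigging, metric, connections,
   curvatures) are left-invariant, hence determined by their values on the
   Lie algebra g = T_e G, which we model as 'rV[R]_n with a Lie bracket. *)
From HB Require Import structures.
From mathcomp Require Import all_boot all_order all_algebra.
From mathcomp Require Import reals.
Unset Printing Implicit Defensive.
Import Order.TTheory GRing.Theory Num.Theory.
Local Open Scope ring_scope.

Section Defs.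
Variables (R : realType) (n : nat).
Notation vec := 'rV[R]_n.

Definition lie_bracket (br : vec -> vec -> vec) : Prop :=
  [/\ (forall a x y z, br (a *: x + y) z = a *: br x z + br y z),
      (forall x y, br x y = - br y x) &
      (forall x y z, br x (br y z) + br y (br z x) + br z (br x y) = 0)].

Definition stratification (br : vec -> vec -> vec) (l : nat) (g : nat -> 'M[R]_n) : Prop :=
  (0 < l)%N /\
  [/\ mxdirect (\sum_(1 <= k < l.+1) g k)%MS,
      (\sum_(1 <= k < l.+1) g k == 1%:M)%MS,
      (forall k, (l < k)%N -> g k = 0),
      (forall i j x y, (0 < i)%N -> (0 < j)%N ->
          (x <= g i)%MS -> (y <= g j)%MS -> (br x y <= g (i + j)%N)%MS) &
      (forall W : 'M[R]_n, (g 1%N <= W)%MS ->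
          (forall x y, (x <= W)%MS -> (y <= W)%MS -> (br x y <= W)%MS) ->
          (1%:M <= W)%MS)].

Definition inner_product_on (U : 'M[R]_n) (b : vec -> vec -> R) : Prop :=
  [/\ (forall a x y z, b (a *: x + y) z = a * b x z + b y z),
      (forall x y, b x y = b y x) &
      (forall x, (x <= U)%MS -> x != 0 -> 0 < b x x)].

(* Levi-Civita connection of the left-invariant metric m, evaluated on
   left-invariant vector fields: torsion free and metric *)
Definition levi_civita (br : vec -> vec -> vec) (m : vec -> vec -> R)
  (nab : vec -> vec -> vec) : Prop :=
  (forall x y, nab x y - nab y x = br x y) /\
  (forall x y z, m (nab x y) z + m y (nab x z) = 0).

Definition riem_curv (br : vec -> vec -> vec) (nab : vec -> vec -> vec) (x y z : vec) : vec :=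
  nab x (nab y z) - nab y (nab x z) - nab (br x y) z.

Definition projection_along (U Dp : 'M[R]_n) (H : vec -> vec) : Prop :=
  forall x, (H x <= U)%MS /\ (x - H x <= Dp)%MS.

(* nabla-bar X Y = H nab_X (H Y) + V nab_X (V Y), with V = id - H *)
Definition nabbar (H : vec -> vec) (nab : vec -> vec -> vec) (x y : vec) : vec :=
  H (nab x (H y)) + (nab x (y - H y) - H (nab x (y - H y))).

Definition torsion (br : vec -> vec -> vec) (H : vec -> vec) (nab : vec -> vec -> vec)
  (x y : vec) : vec :=
  nabbar H nab x y - nabbar H nab y x - br x y.

Definition solovev_form (br : vec -> vec -> vec) (m : vec -> vec -> R)
  (H : vec -> vec) (nab : vec -> vec -> vec) (x y z w : vec) : R :=
  m (riem_curv br (nabbar H nab) x y z) w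
  - 2^-1 * m (torsion br H nab x y) (torsion br H nab z w).

(* generic sectional / Ricci / scalar curvatures of a (0,4)-form
   Kf x y z w = (K(x,y)z, w) on the subspace U with inner product m *)
Definition noncollinear (u v : vec) : Prop := \rank (col_mx u v) = 2%N.

Definition sectional (m : vec -> vec -> R) (Kf : vec -> vec -> vec -> vec -> R) (u v : vec) : R :=
  Kf u v v u / (m u u * m v v - (m u v) ^+ 2).

Definition orthonormal_basis (U : 'M[R]_n) (m : vec -> vec -> R) (e : 'I_(\rank U) -> vec) : Prop :=
  (forall i, (e i <= U)%MS) /\ (forall i j, m (e i) (e j) = (i == j)%:R).

Definition ricci (U : 'M[R]_n) (Kf : vec -> vec -> vec -> vec -> R) (e : 'I_(\rank U) -> vec)
  (x y : vec) : R :=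
  \sum_i Kf (e i) x y (e i).

Definition scalar_curv (U : 'M[R]_n) (Kf : vec -> vec -> vec -> vec -> R) (e : 'I_(\rank U) -> vec) : R :=
  \sum_j ricci U Kf e (e j) (e j).

Definition zero_curvatures (U : 'M[R]_n) (m : vec -> vec -> R)
  (Kf : vec -> vec -> vec -> vec -> R) : Prop :=
  [/\ (forall u v, (u <= U)%MS -> (v <= U)%MS -> noncollinear u v -> sectional m Kf u v = 0),
      (forall e, orthonormal_basis U m e ->
          forall x y, (x <= U)%MS -> (y <= U)%MS -> ricci U Kf e x y = 0) &
      (forall e, orthonormal_basis U m e -> scalar_curv U Kf e = 0)].

End Defs.

Arguments lie_bracket {R n}.
Arguments stratification {R n}.
Arguments inner_product_on {R n}.
Arguments levi_civita {R n}.
Arguments riem_curv {R n}.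
Arguments projection_along {R n}.
Arguments nabbar {R n}.
Arguments torsion {R n}.
Arguments solovev_form {R n}.
Arguments noncollinear {R n}.
Arguments sectional {R n}.
Arguments orthonormal_basis {R n}.
Arguments ricci {R n}.
Arguments scalar_curv {R n}.
Arguments zero_curvatures {R n}.

(* Main.v *)
Require Import Defs.
From HB Require Import structures.
From mathcomp Require Import all_boot all_order all_algebra.
From mathcomp Require Import reals.
From mathcomp Require Import lra.
Import Order.TTheory GRing.Theory Num.Theory.
Local Open Scope ring_scope.

Section Helpers.
Variables (R : realType) (n : nat).
Notation vec := 'rV[R]_n.

Lemma subB_sub (x y : vec) m2 (A : 'M[R]_(m2, n)) :
  (x <= A)%MS -> (y <= A)%MS -> (x - y <= A)%MS.
Proof. by move=> hx hy; rewrite addmx_sub // eqmx_opp. Qed.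

Variable m : vec -> vec -> R.
Hypothesis mlin : forall a x y z, m (a *: x + y) z = a * m x z + m y z.
Hypothesis msym : forall x y, m x y = m y x.

Lemma mD x y z : m (x + y) z = m x z + m y z.
Proof. by have := mlin 1 x y z; rewrite scale1r mul1r. Qed.
Lemma m0l z : m 0 z = 0.
Proof. have := mD 0 0 z; rewrite addr0 => h; lra. Qed.
Lemma m0r z : m z 0 = 0.
Proof. by rewrite msym m0l. Qed.
Lemma mNl x z : m (- x) z = - m x z.
Proof. have := mD x (- x) z; rewrite subrr m0l => h; lra. Qed.
Lemma mNr x z : m z (- x) = - m z x.
Proof. by rewrite msym mNl msym. Qed.
Lemma mBl x y z : m (x - y) z = m x z - m y z.
Proof. by rewrite mD mNl. Qed.
Lemma mBr x y z : m z (x - y) = m z x - m z y.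
Proof. by rewrite msym mBl !(msym z). Qed.

Variable br : vec -> vec -> vec.
Variable nab : vec -> vec -> vec.
Hypothesis LC : levi_civita br m nab.

Lemma koszul x y z :
  2 * m (nab x y) z = m (br x y) z + m (br z y) x - m (br x z) y.
Proof.
case: LC => t me.
have e1 := me x y z; have e2 := me z x y; have e3 := me y z x.
rewrite (msym y) in e1; rewrite (msym x) in e2; rewrite (msym z) in e3.
have t1 := t x y; have t2 := t x z; have t3 := t z y.
have u1 : m (br x y) z = m (nab x y) z - m (nab y x) z by rewrite -t1 mBl.
have u2 : m (br x z) y = m (nab x z) y - m (nab z x) y by rewrite -t2 mBl.
have u3 : m (br z y) x = m (nab z y) x - m (nab y z) x by rewrite -t3 mBl.
rewrite u1 u2 u3; lra.
Qed.

End Helpers.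
Arguments mD {R n m}. Arguments m0l {R n m}. Arguments m0r {R n m}. Arguments mNl {R n m}. Arguments mNr {R n m}. Arguments mBl {R n m}. Arguments mBr {R n m}. Arguments koszul {R n m} mlin msym {br nab}.

Lemma zc_of (R : realType) (n : nat) (U : 'M[R]_n) (m : 'rV[R]_n -> 'rV[R]_n -> R) Kf :
  (forall x y z w, (x <= U)%MS -> (y <= U)%MS -> (z <= U)%MS -> (w <= U)%MS ->
     Kf x y z w = 0) -> zero_curvatures U m Kf.
Proof.
move=> K0; split.
- by move=> u v hu hv _; rewrite /sectional K0 // mul0r.
- move=> e [he _] x y hx hy; rewrite /ricci big1 // => i _; exact: K0.
- move=> e [he _]; rewrite /scalar_curv big1 // => j _.
  rewrite /ricci big1 // => i _; exact: K0.
Qed.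

Theorem corollary2 (R : realType) (n : nat) (br : 'rV[R]_n -> 'rV[R]_n -> 'rV[R]_n)
  (l : nat) (g : nat -> 'M[R]_n) (ip : 'rV[R]_n -> 'rV[R]_n -> R) :
  lie_bracket br -> stratification br l g -> inner_product_on (g 1%N) ip ->
  (* commutative case: Riemannian curvatures of <,> vanish *)
  ((forall x y, br x y = 0) ->
     forall nab, levi_civita br ip nab ->
     zero_curvatures (g 1%N) ip
       (fun x y z w => ip (riem_curv br nab x y z) w))
  /\
  (* non-commutative case: Solov'ev curvatures w.r.t. the rigging
     D^perp(e) = g_2 (+) ... (+) g_l vanish, for any admissible metric *)
  (~ (forall x y, br x y = 0) ->
     forall (m : 'rV[R]_n -> 'rV[R]_n -> R),
     inner_product_on 1%:M m ->
     (forall x y, (x <= g 1%N)%MS -> (y <= g 1%N)%MS -> m x y = ip x y) ->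
     (forall x y, (x <= g 1%N)%MS -> (y <= (\sum_(2 <= k < l.+1) g k))%MS -> m x y = 0) ->
     forall nab, levi_civita br m nab ->
     forall H, projection_along (g 1%N) (\sum_(2 <= k < l.+1) g k)%MS H ->
     zero_curvatures (g 1%N) m (solovev_form br m H nab)).
Proof.
move=> [brlin brN _] [_ [_ _ gl gbr ggen]] [iplin ipsym ippos].
split.
- move=> br0 nab LC.
  have full : forall x : 'rV[R]_n, (x <= g 1%N)%MS.
    move=> x; apply: submx_trans (submx1 x) _; apply: ggen => //.
    by move=> a b _ _; rewrite br0 sub0mx.
  have nab0 : forall x y, nab x y = 0.
    move=> x y; have k := koszul iplin ipsym LC x y (nab x y).
    rewrite !br0 !(m0l iplin) in k.
    apply/eqP; apply: contraT => hne.
    have := ippos _ (full _) hne; lra.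
  apply: zc_of => x y z w _ _ _ _.
  by rewrite /riem_curv !nab0 !subrr (m0l iplin).
- move=> _ m [mlin msym mpos] _ orth nab LC H HP.
  have mD := mD mlin; have m0l := m0l mlin; have m0r := m0r mlin msym.
  have mNl := mNl mlin; have mNr := mNr mlin msym.
  set Dp := (\sum_(2 <= k < l.+1) g k)%MS in orth HP *.
  have mpd : forall v : 'rV[R]_n, m v v = 0 -> v = 0.
    move=> v hv; apply/eqP; apply: contraT => hne.
    have := mpos _ (submx1 v) hne; lra.
  have orth' : forall x y : 'rV[R]_n, (y <= g 1%N)%MS -> (x <= Dp)%MS -> m x y = 0.
    by move=> x y hy hx; rewrite msym orth.
  have cap : forall v : 'rV[R]_n, (v <= g 1%N)%MS -> (v <= Dp)%MS -> v = 0.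
    by move=> v h1 h2; apply: mpd; apply: orth.
  have Hfix : forall x : 'rV[R]_n, (x <= g 1%N)%MS -> H x = x.
    move=> x hx; have [h1 h2] := HP x.
    apply/eqP; rewrite eq_sym -subr_eq0; apply/eqP; apply: cap => //.
    exact: subB_sub.
  have H0 : H 0 = 0 by apply: Hfix; exact: sub0mx.
  have gDp : forall k, (2 <= k)%N -> (g k <= Dp)%MS.
    move=> k hk; case: (leqP k l) => hkl; last by rewrite gl // sub0mx.
    rewrite /Dp (big_cat_nat _ (n:=k)) //=; last by rewrite ltnW.
    rewrite (big_ltn (m:=k)) //.
    exact: submx_trans (addsmxSl _ _) (addsmxSr _ _).
  have br0l : forall z, br 0 z = 0.
    move=> z; have := brlin 1 0 0 z; rewrite scale1r addr0 => h.
    by apply: (@addrI _ (br 0 z)); rewrite addr0 {3}h scale1r.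
  have br0r : forall z, br z 0 = 0 by move=> z; rewrite brN br0l oppr0.
  have k := koszul mlin msym LC.
  have nab0 : forall x, nab x 0 = 0.
    move=> x; apply: mpd; have := k x 0 (nab x 0).
    rewrite !br0r !m0l m0r; lra.
  have brg : forall i j (x y : 'rV[R]_n), (0 < i)%N -> (0 < j)%N ->
      (x <= g i)%MS -> (y <= g j)%MS -> (br x y <= g (i + j)%N)%MS := gbr.
  have Hnab : forall a b : 'rV[R]_n, (a <= g 1%N)%MS -> (b <= g 1%N)%MS -> H (nab a b) = 0.
    move=> a b ha hb; set u := H (nab a b).
    have hu : (u <= g 1%N)%MS by have [] := HP (nab a b).
    have hr : (nab a b - u <= Dp)%MS by have [] := HP (nab a b).
    apply: mpd.
    have e : m u u = m (nab a b) u by rewrite -[in RHS](subrK u (nab a b)) mD // (orth' _ _ hu hr) add0r.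
    have D2 : forall p q : 'rV[R]_n, (p <= g 1%N)%MS -> (q <= g 1%N)%MS -> (br p q <= Dp)%MS.
      by move=> p q hp hq; apply: submx_trans (gDp 2%N isT); exact: (brg 1%N 1%N).
    have b1 := orth' _ _ hu (D2 _ _ ha hb).
    have b2 := orth' _ _ ha (D2 _ _ hu hb).
    have b3 := orth' _ _ hb (D2 _ _ ha hu).
    rewrite e; have := k a b u; rewrite b1 b2 b3; lra.
  have nbar1 : forall a b : 'rV[R]_n, (a <= g 1%N)%MS -> (b <= g 1%N)%MS -> nabbar H nab a b = 0.
    move=> a b ha hb; rewrite /nabbar (Hfix b hb) subrr nab0 H0 Hnab //.
    by rewrite subrr addr0.
  have nbarx0 : forall x, nabbar H nab x 0 = 0.
    by move=> x; rewrite /nabbar H0 subrr nab0 H0 subrr addr0.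
  apply: zc_of => x y z w hx hy hz hw.
  rewrite /solovev_form /riem_curv /torsion (nbar1 y z hy hz) (nbar1 x z hx hz) (nbar1 x y hx hy) (nbar1 y x hy hx) (nbar1 z w hz hw) (nbar1 w z hw hz) !nbarx0 !subrr !sub0r.
  set c := br x y.
  have hc : (c <= g 2%N)%MS by exact: (brg 1%N 1%N).
  have e1 : nabbar H nab c z = H (nab c z).
    by rewrite /nabbar (Hfix z hz) subrr nab0 H0 subrr addr0.
  rewrite e1.
  have e2 : m (- H (nab c z)) w = - m (nab c z) w.
    rewrite mNl //; congr (- _).
    have [h1 h2] := HP (nab c z).
    by rewrite -[in RHS](subrK (H (nab c z)) (nab c z)) mD // (orth' _ _ hw h2) add0r.
  rewrite e2 mNl // mNr //.
  have := k c z w.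
  rewrite (orth' (br c z) _ hw); last by apply: submx_trans (gDp 3%N isT); exact: (brg 2%N 1%N).
  rewrite (orth' (br c w) z hz); last by apply: submx_trans (gDp 3%N isT); exact: (brg 2%N 1%N).
  rewrite brN mNl // (msym (br z w)) => h.
  lra.
Qed.
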